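(* Let $\mathfrak A$ and $\mathcal A$ be Banach algebras with $\mathcal A$ a Banach $\mathfrak A$-bimodule with compatible actions, and let $J$ be the closed ideal of $\mathcal A$ generated by $\{(a\cdot\alpha)b-a(\alpha\cdot b): a,b\in\mathcal A,\alpha\in\mathfrak A\}$. Then $\mathcal A$ is $\mathfrak A$-module uniformly approximately amenable if and only if $\mathcal A/J$ is $\mathfrak A$-module uniformly approximately amenable; and $\mathcal A$ is $\mathfrak A$-module uniformly approximately contractible if and only if $\mathcal A/J$ is $\mathfrak A$-module uniformly approximately contractible.
   Context: Compatible actions: $\alpha\cdot(ab)=(\alpha\cdot a)b$, $(ab)\cdot\alpha=a(b\cdot\alpha)$. $J$ is an $\mathfrak A$-submodule, so $\mathcal A/J$ is a Banach algebra and Banach $\mathfrak A$-bimodule with the induced actions. For a Banach algebra $\mathcal C$ that is a $\mathfrak A$-bimodule with compatible actions, a Banach $\mathcal C$-$\mathfrak A$-module is a Banach space $X$ which is a $\mathcal C$-bimodule and $\mathfrak A$-bimodule with $\alpha\cdot(c\cdot x)=(\alpha\cdot c)\cdot x$, $c\cdot(\alpha\cdot x)=(c\cdot\alpha)\cdot x$, $c\cdot(x\cdot\alpha)=(c\cdot x)\cdot\alpha$ and analogous right identities; commutative if $\alpha\cdot x=x\cdot\alpha$; $X^*$ has dual actions. A module derivation $D:\mathcal C\to Y$ is additive, bounded ($\|D(c)\|\le M\|c\|$), with $D(cd)=D(c)\cdot d+c\cdot D(d)$, $D(\alpha\cdot c)=\alpha\cdot D(c)$, $D(c\cdot\alpha)=D(c)\cdot\alpha$.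 $\mathcal C$ is $\mathfrak A$-module uniformly approximately amenable (resp. contractible) if for every commutative Banach $\mathcal C$-$\mathfrak A$-module $X$ and every module derivation $D:\mathcal C\to X^*$ (resp. $D:\mathcal C\to X$) there is a net $(y_i)$ in $X^*$ (resp. $X$) with $\sup_{\|c\|\le1}\|D(c)-(c\cdot y_i-y_i\cdot c)\|\to0$. *)

(* Defs.v *)
From HB Require Import structures.
From mathcomp Require Import all_boot all_order all_algebra.
From mathcomp Require Import all_classical all_reals.
From mathcomp Require Import topology normedtype.
Set Implicit Arguments. Unset Strict Implicit. Unset Printing Implicit Defensive.
Import Order.TTheory GRing.Theory Num.Theory.
Import numFieldNormedType.Exports.
Local Open Scope classical_set_scope.
Local Open Scope ring_scope.

Section BanachModuleDefs.
Variable K : numFieldType.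

Definition bilinear_map (U V W : normedModType K) (f : U -> V -> W) :=
  (forall k u1 u2 v, f (k *: u1 + u2) v = k *: f u1 v + f u2 v) /\
  (forall k u v1 v2, f u (k *: v1 + v2) = k *: f u v1 + f u v2).

Definition bounded_bilinear (U V W : normedModType K) (f : U -> V -> W) :=
  bilinear_map f /\ exists M : K, 0 <= M /\ forall u v, `|f u v| <= M * `|u| * `|v|.

Definition banach_algebra (A : completeNormedModType K) (mul : A -> A -> A) :=
  [/\ bilinear_map mul,
      (forall a b c, mul a (mul b c) = mul (mul a b) c) &
      (forall a b, `|mul a b| <= `|a| * `|b|)].

Definition banach_bimodule (C : normedModType K) (mulC : C -> C -> C)
    (X : normedModType K) (l : C -> X -> X) (r : X -> C -> X) :=
  [/\ bounded_bilinear l, bounded_bilinear (fun c x => r x c),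
      (forall c d x, l (mulC c d) x = l c (l d x)),
      (forall c d x, r x (mulC c d) = r (r x c) d) &
      (forall c d x, r (l c x) d = l c (r x d))].

Definition compatible_actions (U C : normedModType K) (mulC : C -> C -> C)
    (la : U -> C -> C) (ra : C -> U -> C) :=
  (forall al a b, la al (mulC a b) = mulC (la al a) b) /\
  (forall al a b, ra (mulC a b) al = mulC a (ra b al)).

Definition banach_CU_module (U : normedModType K) (mulU : U -> U -> U)
    (C : normedModType K) (mulC : C -> C -> C)
    (laC : U -> C -> C) (raC : C -> U -> C)
    (X : normedModType K) (lC : C -> X -> X) (rC : X -> C -> X)
    (lU : U -> X -> X) (rU : X -> U -> X) :=
  [/\ banach_bimodule mulC lC rC, banach_bimodule mulU lU rU,
      [/\ (forall al c x, lU al (lC c x) = lC (laC al c) x),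
           (forall al c x, lC c (lU al x) = lC (raC c al) x) &
           (forall al c x, lC c (rU x al) = rU (lC c x) al)] &
      [/\ (forall al c x, rU (rC x c) al = rC x (raC c al)),
           (forall al c x, rC (rU x al) c = rC x (laC al c)) &
           (forall al c x, rC (lU al x) c = lU al (rC x c))]].

Definition commutative_module (U X : normedModType K)
    (lU : U -> X -> X) (rU : X -> U -> X) :=
  forall al x, lU al x = rU x al.

Definition dual_elt (X : normedModType K) (f : X -> K) :=
  (forall k x y, f (k *: x + y) = k * f x + f y) /\
  exists M : K, forall x, `|f x| <= M * `|x|.

Definition dual_l (C X : Type) (r : X -> C -> X) (c : C) (f : X -> K) : X -> K :=
  fun x => f (r x c).
Definition dual_r (C X : Type) (l : C -> X -> X) (f : X -> K) (c : C) : X -> K :=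
  fun x => f (l c x).

(* D : C -> X^* ; the dual norm inequality ||D c|| <= M ||c|| is written out
   as |D c x| <= M ||c|| ||x||. *)
Definition module_derivation_dual (U C : normedModType K)
    (mulC : C -> C -> C) (laC : U -> C -> C) (raC : C -> U -> C)
    (X : normedModType K) (lC : C -> X -> X) (rC : X -> C -> X)
    (lU : U -> X -> X) (rU : X -> U -> X) (D : C -> X -> K) :=
  (forall c, dual_elt (D c)) /\
  [/\ (forall c d x, D (c + d) x = D c x + D d x),
      (exists M : K, forall c x, `|D c x| <= M * `|c| * `|x|),
      (forall c d x, D (mulC c d) x = dual_r lC (D c) d x + dual_l rC c (D d) x),
      (forall al c x, D (laC al c) x = dual_l rU al (D c) x) &
      (forall al c x, D (raC c al) x = dual_r lU (D c) al x)].

Definition module_derivation (U C : normedModType K)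
    (mulC : C -> C -> C) (laC : U -> C -> C) (raC : C -> U -> C)
    (X : normedModType K) (lC : C -> X -> X) (rC : X -> C -> X)
    (lU : U -> X -> X) (rU : X -> U -> X) (D : C -> X) :=
  [/\ (forall c d, D (c + d) = D c + D d),
      (exists M : K, forall c, `|D c| <= M * `|c|),
      (forall c d, D (mulC c d) = rC (D c) d + lC c (D d)),
      (forall al c, D (laC al c) = lU al (D c)) &
      (forall al c, D (raC c al) = rU (D c) al)].

Definition directed_set (I : Type) (le : I -> I -> Prop) :=
  [/\ (exists i : I, True),
      (forall i, le i i),
      (forall i j k, le i j -> le j k -> le i k) &
      (forall i j, exists k, le i k /\ le j k)].

(* sup_{||c||<=1} ||D c - (c.y_i - y_i.c)|| -> 0 along the net, with the
   dual norm written out as a sup over ||x|| <= 1. *)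
Definition module_UAA (U : normedModType K) (mulU : U -> U -> U)
    (C : normedModType K) (mulC : C -> C -> C)
    (laC : U -> C -> C) (raC : C -> U -> C) :=
  forall (X : completeNormedModType K) (lC : C -> X -> X) (rC : X -> C -> X)
         (lU : U -> X -> X) (rU : X -> U -> X),
  banach_CU_module mulU mulC laC raC lC rC lU rU ->
  commutative_module lU rU ->
  forall D : C -> X -> K,
  module_derivation_dual mulC laC raC lC rC lU rU D ->
  exists (I : Type) (le : I -> I -> Prop) (y : I -> X -> K),
    [/\ directed_set le, (forall i, dual_elt (y i)) &
    forall eps : K, 0 < eps -> exists i0, forall i, le i0 i ->
      forall c x, `|c| <= 1 -> `|x| <= 1 ->
      `|D c x - (dual_l rC c (y i) x - dual_r lC (y i) c x)| <= eps].

Definition module_UAC (U : normedModType K) (mulU : U -> U -> U)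
    (C : normedModType K) (mulC : C -> C -> C)
    (laC : U -> C -> C) (raC : C -> U -> C) :=
  forall (X : completeNormedModType K) (lC : C -> X -> X) (rC : X -> C -> X)
         (lU : U -> X -> X) (rU : X -> U -> X),
  banach_CU_module mulU mulC laC raC lC rC lU rU ->
  commutative_module lU rU ->
  forall D : C -> X,
  module_derivation mulC laC raC lC rC lU rU D ->
  exists (I : Type) (le : I -> I -> Prop) (y : I -> X),
    [/\ directed_set le &
    forall eps : K, 0 < eps -> exists i0, forall i, le i0 i ->
      forall c, `|c| <= 1 ->
      `|D c - (lC c (y i) - rC (y i) c)| <= eps].

Definition closed_ideal (A : normedModType K) (mul : A -> A -> A) (I : set A) :=
  [/\ closed I, I 0,
      (forall k a b, I a -> I b -> I (k *: a + b)),
      (forall a b, I b -> I (mul a b)) &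
      (forall a b, I a -> I (mul a b))].

Definition gen_closed_ideal (A : normedModType K) (mul : A -> A -> A) (S : set A) : set A :=
  fun a => forall I, closed_ideal mul I -> S `<=` I -> I a.

Definition module_ideal (U A : normedModType K) (mul : A -> A -> A)
    (la : U -> A -> A) (ra : A -> U -> A) : set A :=
  gen_closed_ideal mul
    [set z | exists a b al, z = mul (ra a al) b - mul a (la al b)].

(* (Q, q) realises A/J: q is a surjective linear map with kernel J, Q carries
   the quotient norm ||q a|| = inf_{j in J} ||a + j||, and the product and the
   U-actions on Q are the induced ones. *)
Definition quotient_by (U A : normedModType K) (mulA : A -> A -> A)
    (laA : U -> A -> A) (raA : A -> U -> A) (J : set A)
    (Q : normedModType K) (mulQ : Q -> Q -> Q)
    (laQ : U -> Q -> Q) (raQ : Q -> U -> Q) (q : A -> Q) :=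
  [/\ (forall k a b, q (k *: a + b) = k *: q a + q b),
      (forall z, exists a, q a = z) &
      (forall a, q a = 0 <-> J a)] /\
  [/\
      (forall a j, J j -> `|q a| <= `|a + j|),
      (forall a eps, 0 < eps -> exists j, J j /\ `|a + j| < `|q a| + eps),
      (forall a b, q (mulA a b) = mulQ (q a) (q b)) &
      (forall al a, q (laA al a) = laQ al (q a) /\ q (raA a al) = raQ (q a) al)].

End BanachModuleDefs.

(* Main.v *)
Require Import Defs.
From HB Require Import structures.
From mathcomp Require Import all_boot all_order all_algebra.
From mathcomp Require Import all_classical all_reals.
From mathcomp Require Import topology normedtype.
Import Order.TTheory GRing.Theory Num.Theory.
Import numFieldNormedType.Exports.
Local Open Scope classical_set_scope.
Local Open Scope ring_scope.
Set Implicit Arguments. Unset Strict Implicit. Unset Printing Implicit Defensive.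

Section Gen.
Context {K : numFieldType}.

Definition addit {V W : zmodType} (g : V -> W) := forall a b, g (a + b) = g a + g b.
Definition addlin {V W : lmodType K} (g : V -> W) :=
  forall k a b, g (k *: a + b) = k *: g a + g b.

Lemma ad_0 {V W : zmodType} (g : V -> W) : addit g -> g 0 = 0.
Proof. move=> h; apply: (addrI (g 0)); by rewrite addr0 -h addr0. Qed.

Lemma ad_N {V W : zmodType} (g : V -> W) : addit g -> forall a, g (- a) = - g a.
Proof.
move=> h a; apply: (addrI (g a)); by rewrite -h !subrr ad_0.
Qed.

Lemma ad_B {V W : zmodType} (g : V -> W) : addit g -> forall a b, g (a - b) = g a - g b.
Proof. by move=> h a b; rewrite h ad_N. Qed.

Lemma al_ad {V W : lmodType K} (g : V -> W) : addlin g -> addit g.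
Proof. by move=> h a b; have := h 1 a b; rewrite !scale1r. Qed.

Lemma al_Z {V W : lmodType K} (g : V -> W) : addlin g -> forall k a, g (k *: a) = k *: g a.
Proof.
move=> h k a; have := h k a 0; rewrite !addr0 => ->.
by rewrite (ad_0 (al_ad h)) addr0.
Qed.

Lemma bil1 {V W X : normedModType K} (f : V -> W -> X) :
  bilinear_map f -> forall w, addlin (f^~ w).
Proof. by case=> h1 _ w k a b; rewrite h1. Qed.

Lemma bil2 {V W X : normedModType K} (f : V -> W -> X) :
  bilinear_map f -> forall v, addlin (f v).
Proof. by case=> _ h2 v k a b; rewrite h2. Qed.

Lemma de_ad {X : normedModType K} (f : X -> K) : dual_elt f -> addit f.
Proof. by case=> h _ a b; have := h 1 a b; rewrite mul1r scale1r. Qed.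

Lemma bound_abs {X : Type} {W : normedZmodType K} (f : X -> W) (n : X -> K) (M : K) :
  (forall c, 0 <= n c) -> (forall c, `|f c| <= M * n c) -> forall c, `|f c| <= `|M| * n c.
Proof.
move=> n0 h c; have := h c => hc.
have := ger0_norm (le_trans (normr_ge0 (f c)) hc).
by rewrite normrM (ger0_norm (n0 c)) => ->.
Qed.

Lemma closed_zero {V : normedModType K} {W : normedZmodType K} (g : V -> W) (L : K) :
  0 <= L -> (forall a b, `|g a - g b| <= L * `|a - b|) -> closed [set v | g v = 0].
Proof.
move=> L0 hL p clp; apply/eqP; rewrite -normr_le0.
apply/ler_addgt0Pr => e e0; rewrite add0r.
have L1 : 0 < L + 1 by rewrite ltr_wpDl.
have d0 : 0 < e / (L + 1) by rewrite divr_gt0.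
have [s [/= gs ps]] := clp _ (nbhsx_ballx p _ d0).
move: ps; rewrite -ball_normE /= => ps.
have := hL p s; rewrite gs subr0 => h1.
apply: (le_trans h1).
apply: (le_trans (ler_wpM2l L0 (ltW ps))).
rewrite mulrA ler_pdivrMr // mulrDr mulr1 [e * L]mulrC lerDl.
exact: ltW.
Qed.
End Gen.

Section Ideal.
Context {K : numFieldType} {U A : completeNormedModType K} (mulU : U -> U -> U)
  (mulA : A -> A -> A) (laA : U -> A -> A) (raA : A -> U -> A).
Hypotheses (HA : banach_algebra mulA) (HUA : banach_bimodule mulU laA raA).

Let S := [set z | exists a b al, z = mulA (raA a al) b - mulA a (laA al b)].
Let J := module_ideal mulA laA raA.

Lemma J_ind (P : set A) : closed_ideal mulA P -> S `<=` P -> forall a, J a -> P a.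
Proof. by move=> h1 h2 a Ja; apply: Ja. Qed.

Lemma S_J z : S z -> J z.
Proof. by move=> Sz I _; apply. Qed.

Lemma J_ci : closed_ideal mulA J.
Proof.
split.
- move=> p clp I hI hS; case: (hI) => cI _ _ _ _; apply: cI.
  by apply: closureS clp => a Ja; apply: Ja.
- by move=> I [].
- by move=> k a b Ja Jb I hI hS; case: (hI) => _ _ h _ _; apply: h; [apply: Ja|apply: Jb].
- by move=> a b Jb I hI hS; case: (hI) => _ _ _ h _; apply: h; apply: Jb.
- by move=> a b Ja I hI hS; case: (hI) => _ _ _ _ h; apply: h; apply: Ja.
Qed.

Lemma mulA_l b : addlin (mulA^~ b).
Proof. by case: HA => h _ _; apply: bil1. Qed.
Lemma mulA_r a : addlin (mulA a).
Proof. by case: HA => h _ _; apply: bil2. Qed.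
Lemma raA_l al : addlin (fun a => raA a al).
Proof. by case: HUA => _ [h _] _ _ _; apply: (bil2 h). Qed.

Lemma S_scale k z : S z -> S (k *: z).
Proof.
case=> a [b [al ->]]; exists (k *: a), b, al.
by rewrite scalerBr (al_Z (raA_l al)) !(al_Z (mulA_l _)).
Qed.

Lemma J_scale k z : J z -> J (k *: z).
Proof.
move=> Jz; case: J_ci => _ _ h _ _; have := h k z 0 Jz.
rewrite addr0; apply; by case: J_ci.
Qed.

Section Mod.
Context {X : normedModType K} (lC : A -> X -> X) (rC : X -> A -> X)
  (lU : U -> X -> X) (rU : X -> U -> X).
Hypothesis Hmod : banach_CU_module mulU mulA laA raA lC rC lU rU.

Lemma lC_l x : addlin (lC^~ x).
Proof. by case: Hmod => [[[h _] _ _ _ _] _ _ _]; apply: bil1. Qed.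
Lemma lC_r a : addlin (lC a).
Proof. by case: Hmod => [[[h _] _ _ _ _] _ _ _]; apply: bil2. Qed.
Lemma rC_l x : addlin (rC x).
Proof. by case: Hmod => [[_ [h _] _ _ _] _ _ _]; apply: (bil1 h). Qed.
Lemma rC_r a : addlin (rC^~ a).
Proof. by case: Hmod => [[_ [h _] _ _ _] _ _ _]; apply: (bil2 h). Qed.

Lemma lC_lip x : exists L, 0 <= L /\ forall a b, `|lC a x - lC b x| <= L * `|a - b|.
Proof.
case: Hmod => [[[_ [M [M0 hM]]] _ _ _ _] _ _ _].
exists (M * `|x|); split; first by rewrite mulr_ge0.
move=> a b; rewrite -(ad_B (al_ad (lC_l x))).
by rewrite mulrAC; apply: hM.
Qed.

Lemma rC_lip x : exists L, 0 <= L /\ forall a b, `|rC x a - rC x b| <= L * `|a - b|.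
Proof.
case: Hmod => [[_ [_ [M [M0 hM]]] _ _ _] _ _ _].
exists (M * `|x|); split; first by rewrite mulr_ge0.
move=> a b; rewrite -(ad_B (al_ad (rC_l x))).
by rewrite mulrAC; apply: hM.
Qed.

Lemma J_ann j : J j -> forall x, lC j x = 0 /\ rC x j = 0.
Proof.
case: Hmod => [[_ _ lCM rCM _] _ [l1 l2 l3] [r1 r2 r3]].
move: j; apply: (@J_ind (fun j => forall x, lC j x = 0 /\ rC x j = 0)); last first.
  move=> z [a [b [al ->]]] x; split.
    rewrite (ad_B (al_ad (lC_l x))) !lCM -l2 l1; exact: subrr.
  rewrite (ad_B (al_ad (rC_l x))) !rCM -r1 r2; exact: subrr.
split.
- move=> p clp x; split.
    have [L [L0 hL]] := lC_lip x.
    apply: (closed_zero L0 hL); apply: closureS clp => a /(_ x) []//.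
  have [L [L0 hL]] := rC_lip x.
  apply: (closed_zero L0 hL); apply: closureS clp => a /(_ x) []//.
- by move=> x; rewrite (ad_0 (al_ad (lC_l x))) (ad_0 (al_ad (rC_l x))).
- move=> k a b ha hb x; have [ha1 ha2] := ha x; have [hb1 hb2] := hb x.
  by rewrite lC_l rC_l ha1 ha2 hb1 hb2 scaler0 addr0.
- move=> a b hb x; have [hb1 hb2] := hb x; have [hb3 hb4] := hb (rC x a).
  by rewrite lCM rCM hb1 hb4 (ad_0 (al_ad (lC_r a))).
- move=> a b ha x; have [ha1 ha2] := ha (lC b x); have [ha3 ha4] := ha x.
  by rewrite lCM rCM ha1 ha4 (ad_0 (al_ad (rC_r b))).
Qed.


Lemma J_D (D : A -> X) : module_derivation mulA laA raA lC rC lU rU D ->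
  forall j, J j -> D j = 0.
Proof.
move=> [Dadd [M hM] Dprod Dla Dra].
have hM' := bound_abs (fun c => normr_ge0 c) hM.
have hlip : forall k a b, `|D (k *: a) - D (k *: b)| <= (`|M| * `|k|) * `|a - b|.
  move=> k a b; rewrite -(ad_B Dadd) -scalerBr -mulrA -normrZ; exact: hM'.
have hS : forall z, S z -> D z = 0.
  move=> z [a [b [al ->]]].
  have [[_ _ lCM rCM _] _ [l1 l2 l3] [r1 r2 r3]] := Hmod.
  by rewrite (ad_B Dadd) !Dprod Dla Dra r2 l2 subrr.
have [_ _ _ Jl Jr] := J_ci.
suff: forall j, J j -> J j /\ forall k, D (k *: j) = 0.
  by move=> h j /h [_ /(_ 1)]; rewrite scale1r.
apply: (@J_ind (fun j => J j /\ forall k, D (k *: j) = 0)); last first.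
  move=> z Sz; split; first exact: S_J.
  by move=> k; apply: hS; apply: S_scale.
split.
- move=> p clp; split.
    by case: J_ci => cJ _ _ _ _; apply: cJ; apply: closureS clp => a [].
  move=> k; have := @closed_zero _ _ _ (fun j => D (k *: j)) _ (mulr_ge0 (normr_ge0 M) (normr_ge0 k)) (hlip k).
  by apply; apply: closureS clp => a [_ /(_ k)].
- split; first by case: J_ci.
  by move=> k; rewrite scaler0 (ad_0 Dadd).
- move=> k a b [Ja ha] [Jb hb]; split; first by case: J_ci => _ _ h _ _; apply: h.
  by move=> m; rewrite scalerDr scalerA Dadd ha hb addr0.
- move=> a b [Jb hb]; split; first by apply: Jl.
  move=> k; rewrite -(al_Z (mulA_r a)) Dprod hb (ad_0 (al_ad (lC_r a))) addr0.
  by have [_ ->] := J_ann (J_scale k Jb) (D a).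
- move=> a b [Ja ha]; split; first by apply: Jr.
  move=> k; rewrite -(al_Z (mulA_l b)) Dprod ha (ad_0 (al_ad (rC_r b))) add0r.
  by have [-> _] := J_ann (J_scale k Ja) (D b).
Qed.

Lemma J_Dd (D : A -> X -> K) : module_derivation_dual mulA laA raA lC rC lU rU D ->
  forall j, J j -> forall x, D j x = 0.
Proof.
move=> [Dde [Dadd [M hM] Dprod Dla Dra]].
have hM' := @bound_abs _ _ _ (fun c : A * X => D c.1 c.2) (fun c => `|c.1| * `|c.2|) M
   (fun c => mulr_ge0 (normr_ge0 c.1) (normr_ge0 c.2)) (fun c => ltac:(rewrite mulrA; exact: hM c.1 c.2)).
have Dad : forall x, addit (fun c => D c x) by move=> x a b; apply: Dadd.
have hlip : forall k x a b, `|D (k *: a) x - D (k *: b) x| <= (`|M| * `|k| * `|x|) * `|a - b|.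
  move=> k x a b; rewrite -(ad_B (Dad x)) -scalerBr.
  have := hM' (k *: (a - b), x); rewrite /= normrZ.
  by rewrite -!mulrA [`|a - b| * _]mulrC.
have hS : forall z, S z -> forall x, D z x = 0.
  move=> z [a [b [al ->]]] x.
  have [[_ _ lCM rCM _] _ [l1 l2 l3] [r1 r2 r3]] := Hmod.
  rewrite (ad_B (Dad x)) !Dprod /dual_r /dual_l Dla Dra /dual_r /dual_l.
  by rewrite l1 -r1 subrr.
have [_ _ _ Jl Jr] := J_ci.
have D0 : forall c, D c 0 = 0 by move=> c; apply: (ad_0 (de_ad (Dde c))).
suff: forall j, J j -> J j /\ forall k x, D (k *: j) x = 0.
  by move=> h j /h [_ /(_ 1)]; rewrite scale1r.
apply: (@J_ind (fun j => J j /\ forall k x, D (k *: j) x = 0)); last first.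
  move=> z Sz; split; first exact: S_J.
  by move=> k; apply: hS; apply: S_scale.
split.
- move=> p clp; split.
    by case: J_ci => cJ _ _ _ _; apply: cJ; apply: closureS clp => a [].
  move=> k x.
  have := @closed_zero _ _ _ (fun j => D (k *: j) x) _ (mulr_ge0 (mulr_ge0 (normr_ge0 M) (normr_ge0 k)) (normr_ge0 x)) (hlip k x).
  by apply; apply: closureS clp => a [_ /(_ k x)].
- split; first by case: J_ci.
  by move=> k x; rewrite scaler0 (ad_0 (Dad x)).
- move=> k a b [Ja ha] [Jb hb]; split; first by case: J_ci => _ _ h _ _; apply: h.
  by move=> m x; rewrite scalerDr scalerA Dadd ha hb addr0.
- move=> a b [Jb hb]; split; first by apply: Jl.
  move=> k x; rewrite -(al_Z (mulA_r a)) Dprod /dual_r /dual_l hb addr0.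
  by have [-> _] := J_ann (J_scale k Jb) x.
- move=> a b [Ja ha]; split; first by apply: Jr.
  move=> k x; rewrite -(al_Z (mulA_l b)) Dprod /dual_r /dual_l ha add0r.
  by have [_ ->] := J_ann (J_scale k Ja) x.
Qed.

End Mod.
End Ideal.

Section Quot.
Context {K : numFieldType} {U A Q : completeNormedModType K} (mulU : U -> U -> U)
  (mulA : A -> A -> A) (laA : U -> A -> A) (raA : A -> U -> A)
  (mulQ : Q -> Q -> Q) (laQ : U -> Q -> Q) (raQ : Q -> U -> Q) (q : A -> Q).
Hypotheses (HA : banach_algebra mulA) (HUA : banach_bimodule mulU laA raA)
  (Hq : quotient_by mulA laA raA (module_ideal mulA laA raA) mulQ laQ raQ q).

Let J := module_ideal mulA laA raA.

Lemma q_lin : addlin q.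
Proof. by case: Hq => [[h _ _] _]. Qed.
Lemma q_le a : `|q a| <= `|a|.
Proof. case: Hq => [_ [h _ _ _]]; have := h a 0; rewrite addr0; apply; by case: (J_ci mulA laA raA). Qed.
Lemma q_J j : J j -> q j = 0.
Proof. by case: Hq => [[_ _ h] _]; move/h. Qed.
Lemma q_eqJ a b : q a = q b -> J (a - b).
Proof. by case: Hq => [[_ _ h] _] e; apply/h; rewrite (ad_B (al_ad q_lin)) e subrr. Qed.
Lemma q_mul a b : q (mulA a b) = mulQ (q a) (q b).
Proof. by case: Hq => [_ [_ _ h _]]. Qed.
Lemma q_la al a : q (laA al a) = laQ al (q a).
Proof. by case: Hq => [_ [_ _ _ h]]; case: (h al a). Qed.
Lemma q_ra al a : q (raA a al) = raQ (q a) al.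
Proof. by case: Hq => [_ [_ _ _ h]]; case: (h al a). Qed.

Definition pick (z : Q) : A :=
  let: exist a _ := cid (match Hq with conj (And3 _ h _) _ => h z end) in a.
Lemma pickK z : q (pick z) = z.
Proof. rewrite /pick; by case: cid. Qed.

Lemma qb (g : A -> K) a0 M : 0 <= M -> (forall j, J j -> g (a0 + j) = g a0) ->
  (forall a, g a <= M * `|a|) -> g a0 <= M * `|q a0|.
Proof.
move=> M0 hJ hg; apply/ler_addgt0Pr => e e0.
have M1 : 0 < M + 1 by rewrite ltr_wpDl.
have d0 : 0 < e / (M + 1) by rewrite divr_gt0.
case: Hq => [_ [_ h _ _]]; have [j [Jj hj]] := h a0 _ d0.
rewrite -(hJ j Jj); apply: (le_trans (hg _)).
apply: (le_trans (ler_wpM2l M0 (ltW hj))).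
rewrite mulrDr lerD2l mulrA ler_pdivrMr // mulrDr mulr1 [e * M]mulrC lerDl.
exact: ltW.
Qed.

Lemma approx2 z : `|z| <= 1 -> exists a, q a = z /\ `|a| <= 2.
Proof.
move=> z1; case: Hq => [[_ hs _] [_ h _ _]].
have [a0 e] := hs z; subst z; have [j [Jj hj]] := h a0 1 ltr01.
exists (a0 + j); split; first by rewrite (al_ad q_lin) (q_J Jj) addr0.
apply: (le_trans (ltW hj)).
by rewrite -[X in _ <= X]/(1 + 1) lerD2r.
Qed.

Section Push.
Context {X : completeNormedModType K} (lC : A -> X -> X) (rC : X -> A -> X)
  (lU : U -> X -> X) (rU : X -> U -> X).
Hypothesis Hmod : banach_CU_module mulU mulA laA raA lC rC lU rU.

Lemma lC_resp a b x : q a = q b -> lC a x = lC b x.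
Proof.
move/q_eqJ => Jab; have [h _] := J_ann Hmod Jab x.
by apply/eqP; rewrite -subr_eq0 -(ad_B (al_ad (lC_l Hmod x))) h.
Qed.
Lemma rC_resp a b x : q a = q b -> rC x a = rC x b.
Proof.
move/q_eqJ => Jab; have [_ h] := J_ann Hmod Jab x.
by apply/eqP; rewrite -subr_eq0 -(ad_B (al_ad (rC_l Hmod x))) h.
Qed.

Definition lCQ z x := lC (pick z) x.
Definition rCQ x z := rC x (pick z).

Lemma push_mod : banach_CU_module mulU mulQ laQ raQ lCQ rCQ lU rU.
Proof.
have Hm := Hmod.
case: Hm => [[[_ [M [M0 hM]]] [_ [N [N0 hN]]] lCM rCM mid] HU [l1 l2 l3] [r1 r2 r3]].
split => //.
- split.
  + split; first split.
    * move=> k z1 z2 x; rewrite /lCQ -(lC_l Hmod); apply: lC_resp.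
      by rewrite q_lin !pickK.
    * by move=> k z x1 x2; rewrite /lCQ (lC_r Hmod).
    * exists M; split => // z x.
      have := @qb (fun a => `|lC a x|) (pick z) (M * `|x|) (mulr_ge0 M0 (normr_ge0 _)).
      rewrite pickK mulrAC; apply.
        by move=> j Jj; rewrite (al_ad (lC_l Hmod x)); have [-> _] := J_ann Hmod Jj x; rewrite addr0.
      by move=> a; rewrite mulrAC; apply: hM.
  + split; first split.
    * move=> k z1 z2 x; rewrite /rCQ -(rC_l Hmod); apply: rC_resp.
      by rewrite q_lin !pickK.
    * by move=> k z x1 x2; rewrite /rCQ (rC_r Hmod).
    * exists N; split => // z x.
      have := @qb (fun a => `|rC x a|) (pick z) (N * `|x|) (mulr_ge0 N0 (normr_ge0 _)).
      rewrite pickK mulrAC; apply.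
        by move=> j Jj; rewrite (al_ad (rC_l Hmod x)); have [_ ->] := J_ann Hmod Jj x; rewrite addr0.
      by move=> a; rewrite mulrAC; apply: hN.
  + move=> c d x; rewrite /lCQ -lCM; apply: lC_resp; by rewrite q_mul !pickK.
  + move=> c d x; rewrite /rCQ -rCM; apply: rC_resp; by rewrite q_mul !pickK.
  + by move=> c d x; rewrite /lCQ /rCQ mid.
- split.
  + move=> al c x; rewrite /lCQ l1; apply: lC_resp; by rewrite q_la !pickK.
  + move=> al c x; rewrite /lCQ l2; apply: lC_resp; by rewrite q_ra !pickK.
  + by move=> al c x; rewrite /lCQ l3.
- split.
  + move=> al c x; rewrite /rCQ r1; apply: rC_resp; by rewrite q_ra !pickK.
  + move=> al c x; rewrite /rCQ r2; apply: rC_resp; by rewrite q_la !pickK.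
  + by move=> al c x; rewrite /rCQ r3.
Qed.

End Push.
End Quot.

Lemma addit_comb {T V : zmodType} (f g h : T -> V) :
  addit f -> addit g -> addit h -> addit (fun c => f c - (g c - h c)).
Proof.
move=> Hf Hg Hh a b; rewrite Hf Hg Hh !opprB opprD.
rewrite (addrACA (h a)).
exact: addrACA.
Qed.

Section Q3.
Context {K : numFieldType} {U A Q : completeNormedModType K} (mulU : U -> U -> U)
  (mulA : A -> A -> A) (laA : U -> A -> A) (raA : A -> U -> A)
  (mulQ : Q -> Q -> Q) (laQ : U -> Q -> Q) (raQ : Q -> U -> Q) (q : A -> Q).
Hypotheses (HA : banach_algebra mulA) (HUA : banach_bimodule mulU laA raA)
  (Hq : quotient_by mulA laA raA (module_ideal mulA laA raA) mulQ laQ raQ q).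

Lemma halve {V : normedZmodType K} (E : Q -> V) e : addit E ->
  (forall a, `|a| <= 1 -> `|E (q a)| <= e / 2) -> forall c, `|c| <= 1 -> `|E c| <= e.
Proof.
move=> HE hb c c1; have [a [qa a2]] := approx2 Hq c1.
set h := 2^-1 *: a.
have hh : h + h = a by rewrite -scalerDl -[2^-1]mul1r -splitr scale1r.
have h1 : `|h| <= 1.
  rewrite normrZ ger0_norm ?invr_ge0 ?ler0n //.
  have i0 : 0 <= 2^-1 :> K by rewrite invr_ge0 ler0n.
  have := ler_wpM2l i0 a2.
  by rewrite mulVf ?pnatr_eq0.
rewrite -qa -hh (al_ad (q_lin Hq)) HE (splitr e).
apply: (le_trans (ler_normD _ _)); apply: lerD; exact: hb.
Qed.


Section Push3.
Context {X : completeNormedModType K} (lC : A -> X -> X) (rC : X -> A -> X)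
  (lU : U -> X -> X) (rU : X -> U -> X).
Hypothesis Hmod : banach_CU_module mulU mulA laA raA lC rC lU rU.

Let pk := pick Hq.

Lemma D_resp (D : A -> X) : module_derivation mulA laA raA lC rC lU rU D ->
  forall a b, q a = q b -> D a = D b.
Proof.
move=> HD a b /(q_eqJ Hq) Jab; have := J_D HA HUA Hmod HD Jab.
by case: HD => Dadd _ _ _ _; rewrite (ad_B Dadd) => /eqP; rewrite subr_eq0 => /eqP.
Qed.

Lemma Dd_resp (D : A -> X -> K) : module_derivation_dual mulA laA raA lC rC lU rU D ->
  forall a b x, q a = q b -> D a x = D b x.
Proof.
move=> HD a b x /(q_eqJ Hq) Jab; have := J_Dd HA HUA Hmod HD Jab x.
case: HD => _ [Dadd _ _ _ _].
have Dad : addit (fun c => D c x) by move=> c d; apply: Dadd.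
by rewrite (ad_B Dad) => /eqP; rewrite subr_eq0 => /eqP.
Qed.

Lemma push_der (D : A -> X) : module_derivation mulA laA raA lC rC lU rU D ->
  module_derivation mulQ laQ raQ (lCQ Hq lC) (rCQ Hq rC) lU rU (fun z => D (pk z)).
Proof.
move=> HD; have Dres : forall a b, q a = q b -> D a = D b.
  move=> a b /(q_eqJ Hq) Jab; have := J_D HA HUA Hmod HD Jab.
  by case: HD => Dadd _ _ _ _; rewrite (ad_B Dadd) => /eqP; rewrite subr_eq0 => /eqP.
case: (HD) => Dadd [M hM] Dprod Dla Dra; split.
- move=> c d; rewrite -Dadd; apply: Dres; by rewrite (al_ad (q_lin Hq)) !pickK.
- exists `|M| => z; have := @qb _ _ _ _ _ _ _ _ _ _ _ Hq (fun a => `|D a|) (pk z) `|M| (normr_ge0 _).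
  rewrite /pk pickK; apply.
    by move=> j Jj; rewrite Dadd (J_D HA HUA Hmod HD Jj) addr0.
  exact: (bound_abs (fun c => normr_ge0 c) hM).
- move=> c d; rewrite /lCQ /rCQ -Dprod; apply: Dres; by rewrite (q_mul Hq) !(pickK Hq).
- move=> al c; rewrite -Dla; apply: Dres; by rewrite (q_la Hq) !(pickK Hq).
- move=> al c; rewrite -Dra; apply: Dres; by rewrite (q_ra Hq) !(pickK Hq).
Qed.

Lemma push_der_d (D : A -> X -> K) : module_derivation_dual mulA laA raA lC rC lU rU D ->
  module_derivation_dual mulQ laQ raQ (lCQ Hq lC) (rCQ Hq rC) lU rU (fun z => D (pk z)).
Proof.
move=> HD; have Dres : forall a b x, q a = q b -> D a x = D b x.
  move=> a b x /(q_eqJ Hq) Jab; have := J_Dd HA HUA Hmod HD Jab x.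
  case: HD => _ [Dadd _ _ _ _].
  have Dad : addit (fun c => D c x) by move=> c d; apply: Dadd.
  by rewrite (ad_B Dad) => /eqP; rewrite subr_eq0 => /eqP.
case: (HD) => Dde [Dadd [M hM] Dprod Dla Dra]; split; first by move=> c; apply: Dde.
split.
- move=> c d x; rewrite -Dadd; apply: Dres; by rewrite (al_ad (q_lin Hq)) !pickK.
- exists `|M| => z x.
  have := @qb _ _ _ _ _ _ _ _ _ _ _ Hq (fun a => `|D a x|) (pk z) (`|M| * `|x|) (mulr_ge0 (normr_ge0 _) (normr_ge0 _)).
  rewrite /pk pickK mulrAC; apply.
    move=> j Jj; rewrite Dadd (J_Dd HA HUA Hmod HD Jj) addr0 //.
  move=> a; rewrite mulrAC -mulrA.
  have := @bound_abs _ _ _ (fun c : A * X => D c.1 c.2) (fun c => `|c.1| * `|c.2|) M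
   (fun c => mulr_ge0 (normr_ge0 c.1) (normr_ge0 c.2)) (fun c => ltac:(rewrite mulrA; exact: hM c.1 c.2)).
  by move/(_ (a, x)).
- move=> c d x; rewrite /dual_r /dual_l /lCQ /rCQ.
  rewrite -[_ + _]/(dual_r lC (D (pk c)) (pk d) x + dual_l rC (pk c) (D (pk d)) x) -Dprod.
  apply: Dres; by rewrite (q_mul Hq) !(pickK Hq).
- move=> al c x; rewrite /dual_l -[D (pk c) _]/(dual_l rU al (D (pk c)) x) -Dla.
  apply: Dres; by rewrite (q_la Hq) !(pickK Hq).
- move=> al c x; rewrite /dual_r -[D (pk c) _]/(dual_r lU (D (pk c)) al x) -Dra.
  apply: Dres; by rewrite (q_ra Hq) !(pickK Hq).
Qed.

End Push3.

Section Pull3.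
Context {X : completeNormedModType K} (lC : Q -> X -> X) (rC : X -> Q -> X)
  (lU : U -> X -> X) (rU : X -> U -> X).
Hypothesis Hmod : banach_CU_module mulU mulQ laQ raQ lC rC lU rU.

Lemma pull_mod : banach_CU_module mulU mulA laA raA
  (fun a x => lC (q a) x) (fun x a => rC x (q a)) lU rU.
Proof.
have Hm := Hmod.
case: Hm => [[[_ [M [M0 hM]]] [_ [N [N0 hN]]] lCM rCM mid] HU [l1 l2 l3] [r1 r2 r3]].
split => //.
- split.
  + split; first split.
    * by move=> k a1 a2 x; rewrite (q_lin Hq) (lC_l Hmod).
    * by move=> k a x1 x2; rewrite (lC_r Hmod).
    * exists M; split => // a x; apply: (le_trans (hM _ _)).
      by rewrite ler_wpM2r // ler_wpM2l // (q_le Hq).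
  + split; first split.
    * by move=> k a1 a2 x; rewrite (q_lin Hq) (rC_l Hmod).
    * by move=> k a x1 x2; rewrite (rC_r Hmod).
    * exists N; split => // a x; apply: (le_trans (hN _ _)).
      by rewrite ler_wpM2r // ler_wpM2l // (q_le Hq).
  + by move=> c d x; rewrite (q_mul Hq) lCM.
  + by move=> c d x; rewrite (q_mul Hq) rCM.
  + by move=> c d x; rewrite mid.
- split.
  + by move=> al c x; rewrite l1 (q_la Hq).
  + by move=> al c x; rewrite l2 (q_ra Hq).
  + by move=> al c x; rewrite l3.
- split.
  + by move=> al c x; rewrite r1 (q_ra Hq).
  + by move=> al c x; rewrite r2 (q_la Hq).
  + by move=> al c x; rewrite r3.
Qed.

Lemma pull_der (D : Q -> X) : module_derivation mulQ laQ raQ lC rC lU rU D ->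
  module_derivation mulA laA raA (fun a x => lC (q a) x) (fun x a => rC x (q a)) lU rU
    (fun a => D (q a)).
Proof.
case=> Dadd [M hM] Dprod Dla Dra; split.
- by move=> c d; rewrite (al_ad (q_lin Hq)) Dadd.
- exists `|M| => c; apply: (le_trans (bound_abs (fun c => normr_ge0 c) hM _)).
  by rewrite ler_wpM2l // (q_le Hq).
- by move=> c d; rewrite (q_mul Hq) Dprod.
- by move=> al c; rewrite (q_la Hq) Dla.
- by move=> al c; rewrite (q_ra Hq) Dra.
Qed.

Lemma pull_der_d (D : Q -> X -> K) : module_derivation_dual mulQ laQ raQ lC rC lU rU D ->
  module_derivation_dual mulA laA raA (fun a x => lC (q a) x) (fun x a => rC x (q a)) lU rU
    (fun a => D (q a)).
Proof.
case=> Dde [Dadd [M hM] Dprod Dla Dra]; split; first by move=> c; apply: Dde.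
split.
- by move=> c d x; rewrite (al_ad (q_lin Hq)) Dadd.
- exists `|M| => c x.
  have := @bound_abs _ _ _ (fun c : Q * X => D c.1 c.2) (fun c => `|c.1| * `|c.2|) M
   (fun c => mulr_ge0 (normr_ge0 c.1) (normr_ge0 c.2)) (fun c => ltac:(rewrite mulrA; exact: hM c.1 c.2)).
  move/(_ (q c, x)) => /= h; apply: (le_trans h).
  by rewrite mulrA ler_wpM2r // ler_wpM2l // (q_le Hq).
- by move=> c d x; rewrite (q_mul Hq) Dprod.
- by move=> al c x; rewrite (q_la Hq) Dla.
- by move=> al c x; rewrite (q_ra Hq) Dra.
Qed.

End Pull3.

Lemma UAA_QA : module_UAA mulU mulQ laQ raQ -> module_UAA mulU mulA laA raA.
Proof.
move=> HQ X lC rC lU rU Hmod Hc D HD.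
have [I [le [y [dir dy conv]]]] := HQ X _ _ lU rU (push_mod Hq Hmod) Hc _ (push_der_d Hmod HD).
exists I, le, y; split => // eps e0.
have [i0 h] := conv eps e0; exists i0 => i li c x c1 x1.
have := h i li (q c) x (le_trans (q_le Hq c) c1) x1.
rewrite /dual_l /dual_r /lCQ /rCQ /=.
by rewrite (rC_resp Hq Hmod x (pickK Hq (q c))) (lC_resp Hq Hmod x (pickK Hq (q c)))
  (Dd_resp Hmod HD x (pickK Hq (q c))).
Qed.

Lemma UAC_QA : module_UAC mulU mulQ laQ raQ -> module_UAC mulU mulA laA raA.
Proof.
move=> HQ X lC rC lU rU Hmod Hc D HD.
have [I [le [y [dir conv]]]] := HQ X _ _ lU rU (push_mod Hq Hmod) Hc _ (push_der Hmod HD).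
exists I, le, y; split => // eps e0.
have [i0 h] := conv eps e0; exists i0 => i li c c1.
have := h i li (q c) (le_trans (q_le Hq c) c1).
rewrite /lCQ /rCQ /=.
by rewrite (rC_resp Hq Hmod (y i) (pickK Hq (q c))) (lC_resp Hq Hmod (y i) (pickK Hq (q c)))
  (D_resp Hmod HD (pickK Hq (q c))).
Qed.

Lemma UAA_AQ : module_UAA mulU mulA laA raA -> module_UAA mulU mulQ laQ raQ.
Proof.
move=> HA' X lC rC lU rU Hmod Hc D HD.
have [I [le [y [dir dy conv]]]] := HA' X _ _ lU rU (pull_mod Hmod) Hc _ (pull_der_d HD).
exists I, le, y; split => // eps e0.
have e2 : 0 < eps / 2 by rewrite divr_gt0 // ltr0Sn.
have [i0 h] := conv _ e2; exists i0 => i li c x c1 x1.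
have [_ [Dadd _ _ _ _]] := HD.
apply: (@halve _ (fun z => D z x - (dual_l rC z (y i) x - dual_r lC (y i) z x)) eps _ _ c c1).
  apply: addit_comb.
  - by move=> a b; apply: Dadd.
  - by move=> a b; rewrite /dual_l (al_ad (rC_l Hmod x)) (de_ad (dy i)).
  - by move=> a b; rewrite /dual_r (al_ad (lC_l Hmod x)) (de_ad (dy i)).
by move=> a a1; apply: h.
Qed.

Lemma UAC_AQ : module_UAC mulU mulA laA raA -> module_UAC mulU mulQ laQ raQ.
Proof.
move=> HA' X lC rC lU rU Hmod Hc D HD.
have [I [le [y [dir conv]]]] := HA' X _ _ lU rU (pull_mod Hmod) Hc _ (pull_der HD).
exists I, le, y; split => // eps e0.
have e2 : 0 < eps / 2 by rewrite divr_gt0 // ltr0Sn.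
have [i0 h] := conv _ e2; exists i0 => i li c c1.
have [Dadd _ _ _ _] := HD.
apply: (@halve _ (fun z => D z - (lC z (y i) - rC (y i) z)) eps _ _ c c1).
  apply: addit_comb.
  - by move=> a b; apply: Dadd.
  - exact: (al_ad (lC_l Hmod (y i))).
  - exact: (al_ad (rC_l Hmod (y i))).
by move=> a a1; apply: h.
Qed.

End Q3.

Theorem lemma4p7 (K : numFieldType)
  (U : completeNormedModType K) (mulU : U -> U -> U)
  (A : completeNormedModType K) (mulA : A -> A -> A)
  (laA : U -> A -> A) (raA : A -> U -> A)
  (Q : completeNormedModType K) (mulQ : Q -> Q -> Q)
  (laQ : U -> Q -> Q) (raQ : Q -> U -> Q) (q : A -> Q) :
  banach_algebra mulU ->
  banach_algebra mulA ->
  banach_bimodule mulU laA raA ->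
  compatible_actions mulA laA raA ->
  quotient_by mulA laA raA (module_ideal mulA laA raA) mulQ laQ raQ q ->
  (module_UAA mulU mulA laA raA <-> module_UAA mulU mulQ laQ raQ) /\
  (module_UAC mulU mulA laA raA <-> module_UAC mulU mulQ laQ raQ).
Proof.
move=> HU HA HUA Hcomp Hq; split; split.
- exact: (UAA_AQ Hq).
- exact: (UAA_QA HA HUA Hq).
- exact: (UAC_AQ Hq).
- exact: (UAC_QA HA HUA Hq).
Qed.
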